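(* Let $S=S^{\top}\in\mathbb{R}^{n\times n}$ be a nonnegative irreducible symmetric matrix and $K=-K^{\top}\in\mathbb{R}^{n\times n}$ a skew-symmetric matrix such that $A=S+K\ge0$ (entrywise). Let $Q$ be a real orthogonal matrix such that $Q^{\top}SQ=\mathrm{diag}(r(S),\lambda_2,\dots,\lambda_n)$. Then $t\mapsto r\big((1-t)A+tA^{\top}\big)$ is constant on $t\in[0,1]$ if and only if $$Q^{\top}KQ=\begin{pmatrix}0 & \mathbf{0}^{\top}\\ \mathbf{0} & K_2\end{pmatrix}$$ for some skew-symmetric $K_2=-K_2^{\top}\in\mathbb{R}^{(n-1)\times(n-1)}$, where $\mathbf{0}\in\mathbb{R}^{n-1}$ is the zero vector.
   Context: $r(M)$ denotes the spectral radius of $M$; $\lambda_2,\dots,\lambda_n$ are the remaining eigenvalues of $S$. *)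

(* Defs.v *)
From HB Require Import structures.
From mathcomp Require Import all_boot all_order all_algebra.
From mathcomp Require Import complex.
From mathcomp Require Import classical_sets reals.
Set Implicit Arguments. Unset Strict Implicit. Unset Printing Implicit Defensive.
Import Order.TTheory GRing.Theory Num.Theory.
Local Open Scope ring_scope.
Local Open Scope classical_set_scope.

Definition complexify (R : rcfType) m n (M : 'M[R]_(m, n)) : 'M[R[i]]_(m, n) :=
  map_mx (fun x : R => real_complex R x) M.

Definition spectral_radius (R : realType) n (M : 'M[R]_n) : R :=
  sup [set Normc.normc z | z in [set z | eigenvalue (complexify M) z]].

Definition symmetric_mx (R : pzRingType) n (M : 'M[R]_n) := M^T = M.
Definition skew_symmetric_mx (R : pzRingType) n (M : 'M[R]_n) := M^T = - M.
Definition nonnegmx (R : numDomainType) m n (M : 'M[R]_(m, n)) :=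
  forall i j, 0 <= M i j.
Definition orthogonalmx (R : pzRingType) n (Q : 'M[R]_n) := Q^T *m Q = 1%:M.

(* Irreducible: not reducible, i.e. there is no nonempty proper index set I
   with M i j = 0 for all i outside I and j inside I (equivalently no
   permutation P with P^T M P block upper triangular with nontrivial blocks). *)
Definition irreduciblemx (R : pzRingType) n (M : 'M[R]_n) :=
  forall I : {set 'I_n}, I != finset.set0 -> I != [set: 'I_n]%SET ->
    exists i j, [/\ i \notin I, j \in I & M i j != 0].

(* Main.v *)
Require Import Defs.
From HB Require Import structures.
From mathcomp Require Import all_boot all_order all_algebra.
From mathcomp Require Import complex.
From mathcomp Require Import classical_sets reals.
From mathcomp Require Import ring lra.
Import Order.TTheory GRing.Theory Num.Theory.
Local Open Scope ring_scope.
Set Implicit Arguments. Unset Strict Implicit.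

Section SR.
Variable R : realType.

Lemma seq_max_ex (T : eqType) (f : T -> R) (s : seq T) : s != [::] ->
  exists2 x, x \in s & forall y, y \in s -> f y <= f x.
Proof.
elim: s => // a s IH _.
have [->|sn] := eqVneq s [::].
  by exists a; rewrite ?mem_head // => y; rewrite inE => /eqP ->.
have [x xs Hx] := IH sn.
have [le|lt] := leP (f a) (f x).
  exists x; first by rewrite inE xs orbT.
  by move=> y; rewrite inE => /orP[/eqP ->|/Hx].
exists a; first by rewrite mem_head.
move=> y; rewrite inE => /orP[/eqP ->//|/Hx H]; exact: (le_trans H (ltW lt)).
Qed.

Lemma sup_max (E : set R) e : E e -> (forall y, E y -> y <= e) -> sup E = e.
Proof.
move=> Ee ub; apply/eqP; rewrite eq_le; apply/andP; split.
  by apply: ge_sup; [exists e | move=> y /ub].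
by apply: ub_le_sup => //; exists e => y /ub.
Qed.

Lemma sr_prop n (M : 'M[R]_n.+1) :
  (exists2 l, eigenvalue (complexify M) l & Normc.normc l = spectral_radius M) /\
  (forall l, eigenvalue (complexify M) l -> Normc.normc l <= spectral_radius M).
Proof.
have [rs Hrs] := closed_field_poly_normal (char_poly (complexify M)).
have eigE l : eigenvalue (complexify M) l = (l \in rs).
  rewrite eigenvalue_root_char Hrs (monicP (char_poly_monic _)) scale1r.
  by rewrite root_prod_XsubC.
have rsn : rs != [::].
  apply/eqP => rs0; move: (size_char_poly (complexify M)).
  by rewrite Hrs rs0 big_nil (monicP (char_poly_monic _)) scale1r size_poly1.
have [x xs Hx] := @seq_max_ex _ (@Normc.normc R) _ rsn.
have -> : spectral_radius M = Normc.normc x.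
  apply: sup_max; first by exists x => //=; rewrite eigE.
  by move=> y [z /= + <-]; rewrite eigE => /Hx.
split; first by exists x; rewrite ?eigE.
by move=> l; rewrite eigE => /Hx.
Qed.

End SR.
Section Ray.
Variable R : realType.
Variable N : nat.
Variables (S Q : 'M[R]_N) (d : 'rV[R]_N) (r : R).
Hypothesis HQ : Q^T *m Q = 1%:M.
Hypothesis HS : Q^T *m S *m Q = diag_mx d.
Hypothesis Hd : forall i, d 0 i <= r.

Lemma QQt : Q *m Q^T = 1%:M.
Proof. exact: mulmx1C. Qed.

Lemma SQd : S = Q *m diag_mx d *m Q^T.
Proof. by rewrite -HS !mulmxA QQt mul1mx -mulmxA QQt mulmx1. Qed.

Definition qf (A : 'M[R]_N) (x : 'rV[R]_N) := (x *m A *m x^T) 0 0.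

Lemma qf_diag (x : 'rV[R]_N) :
  qf S x = \sum_j d 0 j * (x *m Q) 0 j ^+ 2.
Proof.
rewrite /qf SQd !mulmxA -mulmxA -trmx_mul mxE.
by apply: eq_bigr => j _; rewrite mul_mx_diag !mxE mulrAC mulrC expr2 mulrA.
Qed.

Lemma qf_id (x : 'rV[R]_N) :
  (x *m x^T) 0 0 = \sum_j (x *m Q) 0 j ^+ 2.
Proof.
have -> : x *m x^T = x *m Q *m (x *m Q)^T by rewrite trmx_mul mulmxA -(mulmxA x) QQt mulmx1.
rewrite mxE.
by apply: eq_bigr => j _; rewrite !mxE expr2.
Qed.

Lemma ray_le (x : 'rV[R]_N) : qf S x <= r * (x *m x^T) 0 0.
Proof.
rewrite qf_diag qf_id mulr_sumr; apply: ler_sum => j _.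
by apply: ler_wpM2r; rewrite ?sqr_ge0.
Qed.

Lemma ray_eq (x : 'rV[R]_N) : r * (x *m x^T) 0 0 <= qf S x -> x *m S = r *: x.
Proof.
move=> H.
have H0 : \sum_j (r - d 0 j) * (x *m Q) 0 j ^+ 2 = 0.
  apply/eqP; rewrite eq_le; apply/andP; split.
    rewrite (eq_bigr (fun j => r * (x *m Q) 0 j ^+ 2 - d 0 j * (x *m Q) 0 j ^+ 2)).
      by rewrite sumrB -mulr_sumr -qf_id -qf_diag subr_le0.
    by move=> j _; rewrite mulrBl.
  by apply: sumr_ge0 => j _; rewrite mulr_ge0 ?sqr_ge0 ?subr_ge0.
have Hj j : (x *m Q) 0 j * d 0 j = r * (x *m Q) 0 j.
  have Hge : forall k : 'I_N, true -> 0 <= (r - d 0 k) * (x *m Q) 0 k ^+ 2.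
    by move=> k _; rewrite mulr_ge0 ?sqr_ge0 ?subr_ge0.
  have := @psumr_eq0P _ _ _ _ Hge H0 j isT.
  move/eqP; rewrite mulf_eq0 sqrf_eq0 => /orP[|/eqP->]; last by rewrite !mul0r mulr0.
  by rewrite subr_eq0 => /eqP ->; rewrite mulrC.
have E : x *m Q *m diag_mx d = r *: (x *m Q).
  by apply/rowP => j; rewrite mul_mx_diag; move: (Hj j); rewrite !mxE.
by rewrite SQd !mulmxA E -scalemxAl -mulmxA QQt mulmx1.
Qed.

End Ray.

Section Perron.
Variable R : realType.
Variable n : nat.
Variables (S Q : 'M[R]_n.+1) (d : 'rV[R]_n.+1) (r : R).
Hypothesis HQ : Q^T *m Q = 1%:M.
Hypothesis HS : Q^T *m S *m Q = diag_mx d.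
Hypothesis Hd : forall i, d 0 i <= r.
Hypothesis Hr0 : 0 <= r.
Hypothesis Snn : nonnegmx S.
Hypothesis Sirr : irreduciblemx S.

Lemma supp_pos (w : 'rV[R]_n.+1) : (forall j, 0 <= w 0 j) -> w != 0 ->
  w *m S = r *: w -> forall j, 0 < w 0 j.
Proof.
move=> w0 wn0 wS.
case: (boolP [exists j, w 0 j == 0]) => [/existsP[j0 /eqP wj0]|]; last first.
  by move/existsPn => H j; rewrite lt_def H w0.
exfalso.
pose I := [set j | w 0 j == 0].
have I0 : I != finset.set0 by apply/set0Pn; exists j0; rewrite inE wj0.
have IT : I != [set: 'I_n.+1]%SET.
  apply: contra wn0 => /eqP IT; apply/eqP/rowP => j; rewrite mxE.
  have : j \in I by rewrite IT inE.
  by rewrite inE => /eqP.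
have [i [j [iI jI Sij]]] := Sirr I0 IT.
move: iI jI; rewrite !inE => iI /eqP jI.
have := congr1 (fun M : 'rV[R]_n.+1 => M 0 j) wS; rewrite !mxE jI mulr0 => H.
have Hge : forall k : 'I_n.+1, true -> 0 <= w 0 k * S k j.
  by move=> k _; rewrite mulr_ge0.
have := @psumr_eq0P _ _ _ _ Hge H i isT.
by move/eqP; rewrite mulf_eq0 (negbTE iI) (negbTE Sij).
Qed.

Lemma ge_eig (w : 'rV[R]_n.+1) : 
  (forall j, r * w 0 j <= (w *m S) 0 j) -> (forall j, 0 <= w 0 j) ->
  w *m S = r *: w.
Proof.
move=> H w0; apply: (@ray_eq R n.+1 S Q d r HQ HS Hd).
rewrite /qf !mxE mulr_sumr; apply: ler_sum => j _.
by rewrite !mxE mulrA; apply: ler_wpM2r => //; move: (H j); rewrite mxE.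
Qed.

Lemma eig_uniq (w v : 'rV[R]_n.+1) : (forall j, 0 < w 0 j) ->
  w *m S = r *: w -> v *m S = r *: v -> exists c, v = c *: w.
Proof.
move=> wp wS vS.
have sn : enum 'I_n.+1 != [::].
  by apply/eqP => E; have := mem_enum 'I_n.+1 ord0; rewrite E.
have [j1 _ Hj] := @seq_max_ex R _ (fun j => - (v 0 j / w 0 j)) _ sn.
pose c := v 0 j1 / w 0 j1.
exists c.
pose x := v - c *: w.
have x0 : forall j, 0 <= x 0 j.
  move=> j; rewrite !mxE subr_ge0.
  have := Hj j (mem_enum _ j); rewrite lerN2 => H.
  by rewrite -ler_pdivlMr // (wp j).
have xS : x *m S = r *: x.
  by rewrite mulmxBl -scalemxAl vS wS scalerBr !scalerA mulrC.
have xj1 : x 0 j1 = 0.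
  by rewrite !mxE /c divfK ?subrr // gt_eqF.
case: (eqVneq x 0) => [/eqP|xn0]; first by rewrite subr_eq0 => /eqP.
by have := @supp_pos x x0 xn0 xS j1; rewrite xj1 ltxx.
Qed.

Lemma abs_eig (q : 'rV[R]_n.+1) : q *m S = r *: q -> q != 0 ->
  let p := map_mx Num.norm q in (forall j, 0 < p 0 j) /\ p *m S = r *: p.
Proof.
move=> qS qn0 p.
have p0 : forall j, 0 <= p 0 j by move=> j; rewrite mxE.
have pS : p *m S = r *: p.
  apply: ge_eig => // j.
  rewrite !mxE -(ger0_norm Hr0) -normrM.
  have := congr1 (fun M : 'rV[R]_n.+1 => M 0 j) qS; rewrite !mxE => <-.
  apply: le_trans (ler_norm_sum _ _ _) _; apply: ler_sum => k _.
  by rewrite !mxE normrM (ger0_norm (Snn _ _)).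
split => //; apply: supp_pos => //.
apply: contra qn0 => /eqP p0'; apply/eqP/rowP => j.
by have := congr1 (fun M : 'rV[R]_n.+1 => M 0 j) p0'; rewrite !mxE => /eqP; rewrite normr_eq0 => /eqP.
Qed.

End Perron.

Section Cplx.
Variable R : realType.
Variable N : nat.
Local Open Scope complex_scope.

Lemma normc_real (a : R) : Normc.normc (a%:C) = `|a|.
Proof. by rewrite /= expr0n /= addr0 sqrtr_sqr. Qed.

Lemma normc_ge0 (z : R[i]) : 0 <= Normc.normc z.
Proof. by case: z => a b; rewrite /= sqrtr_ge0. Qed.

Lemma real_eig (M : 'M[R]_N) (v : 'rV[R]_N) (a : R) :
  v != 0 -> v *m M = a *: v -> eigenvalue (complexify M) (a%:C).
Proof.
move=> vn0 vM; apply/eigenvalueP; exists (map_mx (real_complex R) v).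
  by rewrite /complexify -map_mxM vM map_mxZ.
by rewrite map_mx_eq0.
Qed.

Lemma cmp (M : 'M[R]_N) (Mnn : nonnegmx M) (l : R[i]) (z : 'rV[R[i]]_N) :
  z *m complexify M = l *: z ->
  forall j, Normc.normc l * (map_mx (@Normc.normc R) z) 0 j <=
            (map_mx (@Normc.normc R) z *m M) 0 j.
Proof.
move=> zM j; rewrite -lecR !mxE rmorphM rmorph_sum /=.
change ((Normc.normc l)%:C) with `|l|.
change ((Normc.normc (z 0 j))%:C) with `|z 0 j|.
rewrite -normrM.
have := congr1 (fun A : 'rV[R[i]]_N => A 0 j) zM; rewrite !mxE => <-.
apply: le_trans (ler_norm_sum _ _ _) _; apply: ler_sum => k _.
rewrite !mxE normrM rmorphM /=; by rewrite (@ger0_norm _ (M k j)%:C) ?lecR.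

Qed.

End Cplx.

Section Bound.
Variable R : realType.
Variable n : nat.

Lemma nz_entry (F : fieldType) (z : 'rV[F]_n.+1) : z != 0 -> exists k, z 0 k != 0.
Proof.
move=> zn0; case/boolP: [exists k, z 0 k != 0] => [/existsP//|/existsPn H].
case/eqP: zn0; apply/rowP => k; rewrite mxE; exact/eqP/negPn/H.
Qed.

Lemma sr_pos_eig (B : 'M[R]_n.+1) (p : 'rV[R]_n.+1) (r : R) : nonnegmx B ->
  (forall j, 0 < p 0 j) -> p *m B = r *: p -> spectral_radius B = r.
Proof.
move=> Bnn pp pB.
have [[l el <-] ub] := sr_prop B.
apply/eqP; rewrite eq_le; apply/andP; split; last first.
  have pn0 : p != 0.
    by apply/eqP => p0; have := pp ord0; rewrite p0 mxE ltxx.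
  have := ub _ (real_eig pn0 pB); rewrite normc_real => H.
  exact: le_trans (ler_norm r) H.
case/eigenvalueP: el => z zM zn0.
pose w := map_mx (@Normc.normc R) z.
have Hc := cmp Bnn zM.
have sn : enum 'I_n.+1 != [::].
  by apply/eqP => E; have := mem_enum 'I_n.+1 ord0; rewrite E.
have [j1 _ Hj] := @seq_max_ex R _ (fun j => w 0 j / p 0 j) _ sn.
pose m := w 0 j1 / p 0 j1.
have wle k : w 0 k <= m * p 0 k.
  by rewrite -ler_pdivrMr // Hj ?mem_enum.
have [k zk] := nz_entry zn0.
have wk : 0 < w 0 k.
  rewrite mxE lt_def normc_ge0 andbT; apply: contra zk => /eqP.
  by move/Normc.eq0_normc => ->.
have mp : 0 < m.
  apply: lt_le_trans (Hj k (mem_enum _ k)); exact: divr_gt0.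
have wj1 : 0 < w 0 j1.
  by have := mulr_gt0 mp (pp j1); rewrite /m divfK // gt_eqF.
rewrite -(ler_pM2r wj1); apply: le_trans (Hc j1) _.
have -> : w 0 j1 = m * p 0 j1 by rewrite /m divfK // gt_eqF.
rewrite mxE.
apply: (@le_trans _ _ (\sum_k0 m * p 0 k0 * B k0 j1)).
  apply: ler_sum => i _; apply: ler_wpM2r; [exact: Bnn | exact: wle].
have := congr1 (fun M : 'rV[R]_n.+1 => M 0 j1) pB; rewrite !mxE => E.
rewrite (eq_bigr (fun i => m * (p 0 i * B i j1))); last by move=> i _; rewrite mulrA.
by rewrite -mulr_sumr E mulrCA.
Qed.

End Bound.

Section Main.
Variable R : realType.
Variable n : nat.

Lemma qf_skew (K : 'M[R]_n.+1) (w : 'rV[R]_n.+1) : skew_symmetric_mx K ->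
  (w *m K *m w^T) 0 0 = 0.
Proof.
move=> Ks.
have E : (w *m K *m w^T)^T = - (w *m K *m w^T).
  by rewrite !trmx_mul trmxK Ks mulNmx mulmxN mulmxA.
have := congr1 (fun M : 'M[R]_1 => M 0 0) E.
rewrite [in LHS]mxE [in RHS]mxE.
move: ((w *m K *m w^T) 0 0) => x H; lra.
Qed.

Lemma blk_to (M : 'M[R]_(1 + n)%N) : skew_symmetric_mx M -> row 0 M = 0 ->
  exists K2 : 'M[R]_n, skew_symmetric_mx K2 /\ M = block_mx 0 0 0 K2.
Proof.
move=> Ms r0.
have Mr j : M 0 j = 0.
  by have := congr1 (fun v : 'rV[R]_(1 + n)%N => v 0 j) r0; rewrite !mxE.
have Mc i : M i 0 = 0.
  have := congr1 (fun A : 'M[R]_(1 + n)%N => A 0 i) Ms; rewrite !mxE Mr.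
  move=> H; lra.
have l0 (i : 'I_1) : lshift n i = 0 by apply: val_inj; case: i => [[]].
exists (drsubmx M); split.
  apply/matrixP => i j; have := congr1 (fun A : 'M[R]_(1 + n)%N => A (rshift 1 j) (rshift 1 i)) Ms.
  rewrite !mxE => H; lra.
rewrite -{1}(submxK M); congr block_mx; apply/matrixP => i j; rewrite !mxE ?l0 ?Mr ?Mc //.
Qed.

Lemma blk_from (M : 'M[R]_(1 + n)%N) (K2 : 'M[R]_n) : M = block_mx 0 0 0 K2 ->
  row 0 M = 0.
Proof.
move=> ->; apply/rowP => j; rewrite mxE [RHS]mxE.
have -> : (0 : 'I_(1 + n)%N) = lshift n (0 : 'I_1) by apply: val_inj.
rewrite block_mxEv.
have H := col_mxEu (row_mx (0:'M[R]_(1,1)) (0:'M[R]_(1,n))) (row_mx 0 K2) 0 j.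
rewrite row_mx0 [RHS]mxE in H; rewrite row_mx0; exact: H.
Qed.

End Main.

Unset Implicit Arguments.
Theorem corollary4 (R : realType) (n : nat) (S K Q : 'M[R]_n.+1) :
  symmetric_mx S -> nonnegmx S -> irreduciblemx S ->
  skew_symmetric_mx K -> nonnegmx (S + K) ->
  orthogonalmx Q ->
  (exists d : 'rV[R]_n.+1,
      Q^T *m S *m Q = diag_mx d /\ d 0 0 = spectral_radius S) ->
  ((forall t1 t2 : R, 0 <= t1 <= 1 -> 0 <= t2 <= 1 ->
      spectral_radius ((1 - t1) *: (S + K) + t1 *: (S + K)^T)
      = spectral_radius ((1 - t2) *: (S + K) + t2 *: (S + K)^T))
   <->
   (exists K2 : 'M[R]_n, skew_symmetric_mx K2 /\
      Q^T *m K *m Q = block_mx 0 0 0 K2 :> 'M[R]_(1 + n))).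
Proof.
move=> Ssym Snn Sirr Kskew Ann HQ [d [HS Hd0]].
have QQ : Q *m Q^T = 1%:M := mulmx1C HQ.
pose r := d 0 0.
have Hr0 : 0 <= r.
  rewrite /r Hd0; have [[l _ <-] _] := sr_prop S; exact: normc_ge0.
have QS : Q^T *m S = diag_mx d *m Q^T.
  by rewrite -HS -!mulmxA QQ mulmx1.
have rowS i : row i Q^T *m S = d 0 i *: row i Q^T.
  by rewrite -row_mul QS row_mul row_diag_mx -scalemxAl -rowE.
have rown0 i : row i Q^T != 0.
  apply/eqP => E.
  have := congr1 (fun M : 'rV[R]_n.+1 => M 0 i) (row_mul i Q^T Q).
  by rewrite HQ E mul0mx !mxE eqxx /= => /eqP; rewrite oner_eq0.
have Hd i : d 0 i <= r.
  have [_ ub] := sr_prop S.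
  have := ub _ (real_eig (rown0 i) (rowS i)); rewrite normc_real -Hd0 => H.
  exact: le_trans (ler_norm _) H.
pose q1 := row 0 Q^T.
have q1S : q1 *m S = r *: q1 := rowS 0.
have [pp pS] := abs_eig HQ HS Hd Hr0 Snn Sirr q1S (rown0 0).
set p := map_mx Num.norm q1 in pp pS.
have [c Hc] := eig_uniq Snn Sirr pp pS q1S.
have At : (S + K)^T = S - K by rewrite linearD /= Ssym Kskew.
have rowM : row 0 (Q^T *m K *m Q : 'M[R]_(1 + n)%N) = q1 *m K *m Q.
  by rewrite !row_mul.
have key : q1 *m K = 0 <-> row 0 (Q^T *m K *m Q : 'M[R]_(1 + n)%N) = 0.
  rewrite rowM; split => [->|H]; first by rewrite mul0mx.
  by rewrite -[q1 *m K]mulmx1 -QQ mulmxA H mul0mx.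
have Mskew : skew_symmetric_mx (Q^T *m K *m Q : 'M[R]_(1 + n)%N).
  by rewrite /skew_symmetric_mx !trmx_mul trmxK Kskew mulNmx mulmxN mulmxA.
split.
- move=> Hc1.
  have HA : spectral_radius (S + K) = r.
    have := Hc1 0 (1/2); rewrite !ler01 lexx /= subr0 scale0r addr0 scale1r.
    have E : (1 - 1/2) *: (S + K) + 1/2 *: (S + K)^T = S.
      apply/matrixP => i j; rewrite At !mxE; lra.
    rewrite E -Hd0 => H; apply: H.
      by [].
    by rewrite divr_ge0 ?ler01 // ler_pdivrMr ?ltr0Sn // mul1r ler1n.
  have [[l el Hl] _] := sr_prop (S + K).
  case/eigenvalueP: el => z zM zn0.
  pose w := map_mx (@Normc.normc R) z.
  have Hc2 := cmp Ann zM; rewrite Hl HA in Hc2.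
  have w0 j : 0 <= w 0 j by rewrite mxE normc_ge0.
  have wn0 : w != 0.
    have [k zk] := nz_entry zn0.
    apply/eqP => /(congr1 (fun M : 'rV[R]_n.+1 => M 0 k)); rewrite !mxE.
    by move/Normc.eq0_normc => zk0; rewrite zk0 eqxx in zk.
  have wS : w *m S = r *: w.
    apply: (ray_eq HQ HS Hd).
    have -> : qf S w = qf (S + K) w.
      by rewrite /qf mulmxDr mulmxDl [in RHS]mxE (qf_skew w Kskew) addr0.
    rewrite /qf !mxE mulr_sumr; apply: ler_sum => j _.
    rewrite !mxE mulrA; apply: ler_wpM2r; first exact: normc_ge0.
    by move: (Hc2 j); rewrite !mxE.
  have wp := supp_pos Snn Sirr w0 wn0 wS.
  have u0 j : 0 <= (w *m K) 0 j.
    have H := Hc2 j; rewrite mulmxDr wS in H.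
    have E : (r *: w + w *m K) 0 j = r * w 0 j + (w *m K) 0 j.
      by rewrite [LHS]mxE [(r *: w) 0 j]mxE.
    by rewrite E lerDl in H.
  have wK : w *m K = 0.
    have q0 := qf_skew w Kskew.
    rewrite mxE in q0.
    have Hge : forall k : 'I_n.+1, true -> 0 <= (w *m K) 0 k * w^T k 0.
      by move=> k _; rewrite [w^T k 0]mxE mulr_ge0.
    apply/rowP => j; rewrite [RHS]mxE.
    have := @psumr_eq0P _ _ _ _ Hge q0 j isT.
    by move/eqP; rewrite [w^T j 0]mxE mulf_eq0 (gt_eqF (wp j)) orbF => /eqP.
  have [c' Hc'] := eig_uniq Snn Sirr wp wS q1S.
  have q1K : q1 *m K = 0 by rewrite Hc' -scalemxAl wK scaler0.
  have [K2 [K2s E]] := blk_to Mskew (proj1 key q1K).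
  by exists K2.
- move=> [K2 [K2s E]].
  have q1K : q1 *m K = 0 by apply/key; exact: (blk_from E).
  have cn0 : c != 0.
    by apply: contra (rown0 0) => /eqP c0; rewrite -/q1 Hc c0 scale0r.
  have pK : p *m K = 0.
    have -> : p = c^-1 *: q1 by rewrite Hc scalerA mulVf // scale1r.
    by rewrite -scalemxAl q1K scaler0.
  have pB t : p *m ((1 - t) *: (S + K) + t *: (S + K)^T) = r *: p.
    rewrite At mulmxDr -!scalemxAr mulmxDr mulmxBr pS pK addr0 subr0.
    by rewrite -scalerDl subrK scale1r.
  have Bnn t : 0 <= t <= 1 -> nonnegmx ((1 - t) *: (S + K) + t *: (S + K)^T).
    move=> /andP[t0 t1] i j; rewrite !mxE.
    have a1 := Ann i j; have a2 := Ann j i; rewrite !mxE in a1 a2.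
    by rewrite addr_ge0 // mulr_ge0 ?subr_ge0.
  move=> t1 t2 H1 H2.
  by rewrite (sr_pos_eig (Bnn _ H1) pp (pB t1)) (sr_pos_eig (Bnn _ H2) pp (pB t2)).
Qed.
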